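(* Let $\sigma:\mathbb{R}\to\mathbb{R}$ satisfy Assumption 1 (stated in the context). Then there is a constant $C_\sigma>0$, depending only on $\sigma$, such that the following holds for every integer $d\ge 2$ and every $\epsilon\in(0,1)$. Let $\varphi:[0,\infty)\to\mathbb{R}$ be such that $f(\mathbf{x})=\varphi(\|\mathbf{x}\|)$ is $1$-Lipschitz on $\mathbb{R}^d$. Then there exists a depth-$2$ $\sigma$-network of width $$w\le \exp\!\big(C_\sigma\,\epsilon^{-9}\log(d/\epsilon)\big),$$ i.e. parameters $b_0,v_i,b_i\in\mathbb{R}$ and $\mathbf{w}_i\in\mathbb{R}^d$, $i=1,\dots,w$, such that $$\sup_{\mathbf{x}\in B_d}\Big|\sum_{i=1}^{w}v_i\,\sigma(\mathbf{w}_i^{\top}\mathbf{x}+b_i)+b_0-f(\mathbf{x})\Big|\le\epsilon .$$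
   Context: $\|\cdot\|$ is the Euclidean norm and $B_d=\{\mathbf{x}\in\mathbb{R}^d:\|\mathbf{x}\|\le 1\}$. A depth-$2$ network of width $w$ with activation $\sigma$ is a function $\mathbf{x}\mapsto\sum_{i=1}^{w}v_i\sigma(\mathbf{w}_i^\top\mathbf{x}+b_i)+b_0$. Assumption 1: there is a constant $c_\sigma\ge 1$ (depending only on $\sigma$) such that for every $L$-Lipschitz function $g:\mathbb{R}\to\mathbb{R}$ which is constant outside an interval $[-R,R]$, and every $\delta>0$, there exist scalars $a,\{\alpha_i,\beta_i,\gamma_i\}_{i=1}^{w}$ with $w\le c_\sigma RL/\delta$ such that $h(x)=a+\sum_{i=1}^{w}\alpha_i\sigma(\beta_i x-\gamma_i)$ satisfies $\sup_{x\in\mathbb{R}}|g(x)-h(x)|\le\delta$. *)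

(* Defs.v *)
(* classical reals. Vectors in R^d are represented as
   functions nat -> R, of which only the coordinates 0..d-1 are used. *)
From Stdlib Require Import Reals.
Open Scope R_scope.

Fixpoint sumR (n : nat) (f : nat -> R) : R :=
  match n with
  | O => 0
  | S m => sumR m f + f m
  end.

Definition dotR (d : nat) (u x : nat -> R) : R := sumR d (fun k => u k * x k).

Definition normR (d : nat) (x : nat -> R) : R := sqrt (sumR d (fun k => x k ^ 2)).

Definition Assumption1 (sigma : R -> R) (c : R) : Prop :=
  1 <= c /\
  forall (g : R -> R) (L Rad delta : R),
    0 <= Rad -> 0 < delta ->
    (forall x y, Rabs (g x - g y) <= L * Rabs (x - y)) ->
    (exists k, forall x, (x < - Rad \/ Rad < x) -> g x = k) ->
    exists (w : nat) (a : R) (alpha beta gamma : nat -> R),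
      INR w <= c * Rad * L / delta /\
      forall x, Rabs (g x - (a + sumR w (fun i => alpha i * sigma (beta i * x - gamma i)))) <= delta.

(* Main.v *)
Require Import Defs.
From Stdlib Require Import Reals Lra Lia List ZArith.
Open Scope R_scope.

Lemma sumR_ext : forall n f g, (forall i, (i < n)%nat -> f i = g i) -> sumR n f = sumR n g.
Proof.
  induction n; intros f g H; simpl; auto.
  rewrite (IHn f g) by (intros; apply H; lia). rewrite H by lia. reflexivity.
Qed.

Lemma sumR_add : forall n f g, sumR n (fun i => f i + g i) = sumR n f + sumR n g.
Proof. induction n; intros; simpl; [lra|rewrite IHn; lra]. Qed.

Lemma sumR_scal : forall n a f, sumR n (fun i => a * f i) = a * sumR n f.
Proof. induction n; intros; simpl; [lra|rewrite IHn; lra]. Qed.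

Lemma sumR_const : forall n a, sumR n (fun _ => a) = INR n * a.
Proof. induction n; intros; simpl sumR; [simpl; lra|rewrite IHn, S_INR; lra]. Qed.

Lemma sumR_app : forall w1 w2 f, sumR (w1 + w2) f = sumR w1 f + sumR w2 (fun i => f (w1 + i)%nat).
Proof.
  intros w1 w2 f; induction w2; simpl.
  - rewrite Nat.add_0_r; lra.
  - rewrite <- plus_n_Sm; simpl. rewrite IHw2; lra.
Qed.

Lemma sumR_shift : forall n f, sumR (S n) f = f O + sumR n (fun i => f (S i)).
Proof. induction n; intros; simpl in *; [lra|]. rewrite IHn; simpl; lra. Qed.

Lemma sumR_le : forall n f g, (forall i, (i < n)%nat -> f i <= g i) -> sumR n f <= sumR n g.
Proof. induction n; intros f g H; simpl; [lra|]. pose proof (IHn f g (fun i Hi => H i ltac:(lia))). pose proof (H n ltac:(lia)). lra. Qed.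

Lemma sumR_abs : forall n f, Rabs (sumR n f) <= sumR n (fun i => Rabs (f i)).
Proof. induction n; intros; simpl. rewrite Rabs_R0; lra.
  eapply Rle_trans; [apply Rabs_triang|]. pose proof (IHn f); lra. Qed.

Lemma sumR_nonneg : forall n f, (forall i, (i < n)%nat -> 0 <= f i) -> 0 <= sumR n f.
Proof. intros. replace 0 with (sumR n (fun _ => 0)). apply sumR_le; auto.
  rewrite sumR_const; lra. Qed.

Lemma sum_f_R0_sumR : forall f n, sum_f_R0 f n = sumR (S n) f.
Proof. induction n; simpl in *; [lra|]. rewrite IHn. simpl. lra. Qed.

Section Net.
Variable d : nat.
Variable sigma : R -> R.

Definition Net (w : nat) (v b : nat -> R) (W : nat -> nat -> R) (b0 : R) (x : nat -> R) :=
  sumR w (fun i => v i * sigma (dotR d (W i) x + b i)) + b0.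

Definition Approx (F : (nat -> R) -> R) (Wd : R) (e : R) : Prop :=
  exists w v b W b0, INR w <= Wd /\
    forall x, normR d x <= 1 -> Rabs (Net w v b W b0 x - F x) <= e.

Lemma Approx_const : forall a, Approx (fun _ => a) 0 0.
Proof. intros a. exists O, (fun _ => 0), (fun _ => 0), (fun _ _ => 0), a.
  split; [simpl; lra|]. intros x _. unfold Net; simpl. replace (0 + a - a) with 0 by ring.
  rewrite Rabs_R0; lra. Qed.

Lemma Approx_ext : forall F G W e, Approx F W e -> (forall x, normR d x <= 1 -> F x = G x) -> Approx G W e.
Proof. intros F G W e (w & v & b & Wm & b0 & H1 & H2) H. exists w, v, b, Wm, b0. split; auto.
  intros x Hx. rewrite <- H; auto. Qed.

Lemma Approx_weaken : forall F W e W' e', Approx F W e -> W <= W' -> e <= e' -> Approx F W' e'.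
Proof. intros F W e W' e' (w & v & b & Wm & b0 & H1 & H2) HW He. exists w, v, b, Wm, b0. split; [lra|].
  intros x Hx. specialize (H2 x Hx). lra. Qed.

Lemma Approx_scal : forall F W e a, Approx F W e -> Approx (fun x => a * F x) W (Rabs a * e).
Proof. intros F W e a (w & v & b & Wm & b0 & H1 & H2). exists w, (fun i => a * v i), b, Wm, (a * b0).
  split; auto. intros x Hx. unfold Net in *.
  replace (sumR w (fun i => a * v i * sigma (dotR d (Wm i) x + b i)) + a * b0 - a * F x)
    with (a * (sumR w (fun i => v i * sigma (dotR d (Wm i) x + b i)) + b0 - F x)).
  rewrite Rabs_mult. apply Rmult_le_compat_l; [apply Rabs_pos| auto].
  assert (E: sumR w (fun i => a * v i * sigma (dotR d (Wm i) x + b i)) = a * sumR w (fun i => v i * sigma (dotR d (Wm i) x + b i))).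
  { rewrite <- sumR_scal; apply sumR_ext; intros; ring. }
  rewrite E; ring. Qed.

Definition cat (w1 : nat) {A} (f1 f2 : nat -> A) := fun i => if Nat.ltb i w1 then f1 i else f2 (i - w1)%nat.

Lemma Approx_add : forall F1 F2 W1 W2 e1 e2, Approx F1 W1 e1 -> Approx F2 W2 e2 ->
  Approx (fun x => F1 x + F2 x) (W1 + W2) (e1 + e2).
Proof.
  intros F1 F2 W1 W2 e1 e2 (w1 & v1 & b1 & M1 & c1 & H1 & K1) (w2 & v2 & b2 & M2 & c2 & H2 & K2).
  exists (w1 + w2)%nat, (cat w1 v1 v2), (cat w1 b1 b2), (cat w1 M1 M2), (c1 + c2).
  split. rewrite plus_INR; lra.
  intros x Hx. specialize (K1 x Hx). specialize (K2 x Hx). unfold Net in *.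
  rewrite sumR_app.
  rewrite (sumR_ext w1 _ (fun i => v1 i * sigma (dotR d (M1 i) x + b1 i))).
  rewrite (sumR_ext w2 _ (fun i => v2 i * sigma (dotR d (M2 i) x + b2 i))).
  eapply Rle_trans; [|apply Rplus_le_compat; [apply K1|apply K2]].
  eapply Rle_trans; [|apply Rabs_triang]. right; f_equal; ring.
  - intros i Hi. unfold cat. replace (Nat.ltb (w1 + i) w1) with false by (symmetry; apply Nat.ltb_ge; lia).
    replace (w1 + i - w1)%nat with i by lia. reflexivity.
  - intros i Hi. unfold cat. replace (Nat.ltb i w1) with true by (symmetry; apply Nat.ltb_lt; lia). reflexivity.
Qed.

Lemma Approx_sub : forall F1 F2 W1 W2 e1 e2, Approx F1 W1 e1 -> Approx F2 W2 e2 ->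
  Approx (fun x => F1 x - F2 x) (W1 + W2) (e1 + e2).
Proof. intros. eapply Approx_ext. eapply Approx_weaken. apply Approx_add. apply H. apply (Approx_scal _ _ _ (-1) H0).
  apply Rle_refl. replace (Rabs (-1)) with 1 by (unfold Rabs; destruct Rcase_abs; lra); lra. intros; simpl; ring. Qed.

Lemma Approx_sumR : forall n (F : nat -> (nat -> R) -> R) W e,
  (forall k, (k < n)%nat -> Approx (F k) W e) ->
  Approx (fun x => sumR n (fun k => F k x)) (INR n * W) (INR n * e).
Proof.
  induction n; intros F W e H.
  - simpl. eapply Approx_weaken; [apply (Approx_const 0)|lra|lra].
  - eapply Approx_weaken. apply Approx_add. apply IHn. intros; apply H; lia. apply H; lia.
    rewrite S_INR; lra. rewrite S_INR; lra.
Qed.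

Lemma Approx_base : forall c, Assumption1 sigma c -> forall (g : R -> R) (L delta : R) (u : nat -> R),
  0 < delta -> (forall x y, Rabs (g x - g y) <= L * Rabs (x - y)) ->
  (exists k, forall x, (x < -1 \/ 1 < x) -> g x = k) ->
  Approx (fun x => g (dotR d u x)) (c * 1 * L / delta) delta.
Proof.
  intros c [_ Hc] g L delta u Hd HL Hk.
  destruct (Hc g L 1 delta ltac:(lra) Hd HL Hk) as (w & a & al & be & ga & Hw & Ha).
  exists w, al, (fun i => - ga i), (fun i k => be i * u k), a. split; auto.
  intros x _. unfold Net. rewrite <- Rabs_Ropp.
  eapply Rle_trans; [|apply (Ha (dotR d u x))]. right. f_equal.
  replace (sumR w (fun i => al i * sigma (dotR d (fun k => be i * u k) x + - ga i)))
    with (sumR w (fun i => al i * sigma (be i * dotR d u x - ga i))). ring.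
  apply sumR_ext. intros i _. f_equal. f_equal. unfold dotR.
  rewrite <- sumR_scal. unfold Rminus. f_equal. apply sumR_ext; intros; ring.
Qed.

End Net.

Fixpoint PolyLt (n : nat) (h : R -> R) : Prop :=
  match n with
  | O => forall z, h z = 0
  | S n' => exists c g, PolyLt n' g /\ forall z, h z = c * z ^ n' + g z
  end.

Lemma PolyLt_ext : forall n h1 h2, (forall z, h1 z = h2 z) -> PolyLt n h1 -> PolyLt n h2.
Proof. destruct n; simpl; intros h1 h2 E H.
  - intros z; rewrite <- E; auto.
  - destruct H as (c & g & Hg & Hz). exists c, g. split; auto. intros z; rewrite <- E; auto. Qed.

Lemma PolyLt_lin : forall n f g a b, PolyLt n f -> PolyLt n g -> PolyLt n (fun z => a * f z + b * g z).
Proof. induction n; simpl; intros f g a b Hf Hg.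
  - intros z; rewrite Hf, Hg; ring.
  - destruct Hf as (c1 & g1 & H1 & E1). destruct Hg as (c2 & g2 & H2 & E2).
    exists (a * c1 + b * c2), (fun z => a * g1 z + b * g2 z). split; [apply IHn; auto|].
    intros z; rewrite E1, E2; ring. Qed.

Lemma PolyLt_zero : forall n, PolyLt n (fun _ => 0).
Proof. induction n; simpl; auto. exists 0, (fun _ => 0); split; auto. intros; ring. Qed.

Lemma PolyLt_S : forall n f, PolyLt n f -> PolyLt (S n) f.
Proof. intros n f H. exists 0, f. split; auto. intros; ring. Qed.

Lemma PolyLt_monom : forall n c, PolyLt (S n) (fun z => c * z ^ n).
Proof. intros n c. exists c, (fun _ => 0). split; [apply PolyLt_zero|intros; ring]. Qed.

Lemma PolyLt_mulz : forall n f, PolyLt n f -> PolyLt (S n) (fun z => z * f z).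
Proof. induction n; intros f H.
  - exists 0, (fun _ => 0). split; [apply PolyLt_zero|]. intros z; simpl in H; rewrite H; ring.
  - destruct H as (c & g & Hg & E). exists c, (fun z => z * g z). split; [apply IHn; auto|].
    intros z; rewrite E; simpl; ring. Qed.

Lemma shift_pow : forall y n, PolyLt n (fun z => (z + y) ^ (S n) - z ^ (S n) - INR (S n) * y * z ^ n).
Proof. intros y; induction n.
  - simpl. intros; ring.
  - eapply PolyLt_ext; [|apply (PolyLt_lin (S n) (fun z => INR (S n) * y * y * z ^ n) (fun z => z * ((z + y) ^ (S n) - z ^ (S n) - INR (S n) * y * z ^ n) + y * ((z + y) ^ (S n) - z ^ (S n) - INR (S n) * y * z ^ n)) 1 1)].
    + intros z. rewrite !S_INR. simpl. ring.
    + apply PolyLt_monom.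
    + eapply PolyLt_ext; [|apply (PolyLt_lin (S n) _ _ 1 y (PolyLt_mulz n _ IHn) (PolyLt_S _ _ IHn))].
      intros z; simpl; ring.
Qed.

Definition Dlt (y : R) (h : R -> R) := fun z => h (z + y) - h (z - y).

Lemma Dlt_pow : forall y n, PolyLt n (fun z => Dlt y (fun w => w ^ S n) z - 2 * INR (S n) * y * z ^ n).
Proof. intros y n. pose proof (shift_pow y n) as A. pose proof (shift_pow (-y) n) as B.
  eapply PolyLt_ext; [|apply (PolyLt_lin _ _ _ 1 (-1) A B)].
  intros z; unfold Dlt. replace (z - y) with (z + - y) by ring. ring. Qed.

Lemma Dlt_lower : forall y n h, PolyLt (S n) h -> PolyLt n (Dlt y h).
Proof. intros y; induction n; intros h (c & g & Hg & E).
  - simpl in *. intros z; unfold Dlt; rewrite !E, !Hg; ring.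
  - pose proof (IHn g Hg) as Hd. pose proof (Dlt_pow y n) as Hp.
    eapply PolyLt_ext; [|apply (PolyLt_lin (S n) (fun z => 2 * INR (S n) * y * z ^ n + (Dlt y (fun w => w ^ S n) z - 2 * INR (S n) * y * z ^ n)) (Dlt y g) c 1)].
    + intros z. unfold Dlt. rewrite !E. ring.
    + refine (PolyLt_ext _ _ _ _ (PolyLt_lin (S n) _ _ 1 1 (PolyLt_monom n (2*INR (S n)*y)) (PolyLt_S _ _ Hp))). intros; simpl; ring.
    + apply PolyLt_S; auto.
Qed.

Fixpoint Pol (ys : list R) (h : R -> R) (z : R) : R :=
  match ys with
  | nil => h z
  | y :: ys' => Pol ys' h (z + y) - Pol ys' h (z - y)
  end.

Lemma Pol_ext : forall ys h1 h2, (forall z, h1 z = h2 z) -> forall z, Pol ys h1 z = Pol ys h2 z.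
Proof. induction ys; simpl; intros; auto. rewrite !(IHys h1 h2); auto. Qed.

Lemma Pol_lin : forall ys h1 h2 a b z, Pol ys (fun w => a * h1 w + b * h2 w) z = a * Pol ys h1 z + b * Pol ys h2 z.
Proof. induction ys; simpl; intros; auto. rewrite !IHys; ring. Qed.

Lemma Pol_swap : forall ys y h z, Pol ys (Dlt y h) z = Pol (y :: ys) h z.
Proof. induction ys; intros; simpl.
  - reflexivity.
  - rewrite !IHys. simpl.
    replace (z + a + y) with (z + y + a) by ring. replace (z + a - y) with (z - y + a) by ring.
    replace (z - a + y) with (z + y - a) by ring. replace (z - a - y) with (z - y - a) by ring. ring.
Qed.

Lemma Pol_vanish : forall ys h, PolyLt (length ys) h -> forall z, Pol ys h z = 0.
Proof. induction ys; intros h H z; [simpl in *; auto|].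
  rewrite <- Pol_swap. apply IHys. apply Dlt_lower; exact H. Qed.

Definition prodR (ys : list R) := fold_right Rmult 1 ys.

Lemma Pol_top : forall ys z, Pol ys (fun w => w ^ length ys) z = 2 ^ length ys * INR (Factorial.fact (length ys)) * prodR ys.
Proof. induction ys; intros z; try change (length (?a :: ?l)) with (S (length l)).
  - simpl. ring.
  - rewrite <- Pol_swap. set (n := length ys).
    rewrite (Pol_ext ys _ (fun w => (2 * INR (S n) * a) * (w ^ n) + 1 * (Dlt a (fun w => w ^ S n) w - 2 * INR (S n) * a * w ^ n))).
    2: intros; ring.
    rewrite Pol_lin. rewrite IHys. rewrite (Pol_vanish ys). 2: apply Dlt_pow.
    unfold n; simpl prodR. rewrite fact_simpl, mult_INR. simpl pow. ring.
Qed.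

Definition ev (k : nat) (a : R) : nat -> R := fun j => if Nat.eqb j k then a else 0.

Lemma sumR_single : forall n k f, (k < n)%nat -> sumR n (fun j => if Nat.eqb j k then f j else 0) = f k.
Proof. induction n; intros k f Hk; [lia|]. simpl.
  destruct (Nat.eq_dec k n) as [->|Hne].
  - rewrite Nat.eqb_refl. rewrite (sumR_ext n _ (fun _ => 0)). rewrite sumR_const; ring.
    intros i Hi. replace (Nat.eqb i n) with false by (symmetry; apply Nat.eqb_neq; lia). auto.
  - rewrite IHn by lia. replace (Nat.eqb n k) with false by (symmetry; apply Nat.eqb_neq; lia). ring.
Qed.

Section Vec.
Variable d : nat.

Lemma dot_add : forall u v x, dotR d (fun k => u k + v k) x = dotR d u x + dotR d v x.
Proof. intros; unfold dotR; rewrite <- sumR_add; apply sumR_ext; intros; ring. Qed.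
Lemma dot_sub : forall u v x, dotR d (fun k => u k - v k) x = dotR d u x - dotR d v x.
Proof. intros; unfold dotR. replace (sumR d (fun k => u k * x k) - sumR d (fun k => v k * x k))
  with (sumR d (fun k => u k * x k) + (-1) * sumR d (fun k => v k * x k)) by ring.
  rewrite <- sumR_scal, <- sumR_add. apply sumR_ext; intros; ring. Qed.
Lemma dot_zero : forall x, dotR d (fun _ => 0) x = 0.
Proof. intros; unfold dotR. rewrite (sumR_ext d _ (fun _ => 0)) by (intros; ring). rewrite sumR_const; ring. Qed.
Lemma dot_ev : forall k a x, (k < d)%nat -> dotR d (ev k a) x = a * x k.
Proof. intros k a x Hk. unfold dotR, ev.
  rewrite (sumR_ext d _ (fun j => if Nat.eqb j k then a * x j else 0)).
  apply sumR_single; auto. intros i _. destruct (Nat.eqb i k); ring. Qed.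

Lemma sq_nonneg_sum : forall x, 0 <= sumR d (fun k => x k ^ 2).
Proof. intros; apply sumR_nonneg; intros; apply pow2_ge_0. Qed.

Lemma coord_le : forall x k, (k < d)%nat -> Rabs (x k) <= normR d x.
Proof. intros x k Hk. unfold normR.
  rewrite <- (sqrt_pow2 (Rabs (x k))) by apply Rabs_pos. apply sqrt_le_1_alt.
  replace (Rabs (x k) ^ 2) with (sumR d (fun j => if Nat.eqb j k then x j ^ 2 else 0)).
  2: rewrite sumR_single by auto; rewrite <- pow2_abs; auto.
  apply sumR_le. intros i _. destruct (Nat.eqb i k); [lra|apply pow2_ge_0]. Qed.

Lemma coord_ball : forall x k, (k < d)%nat -> normR d x <= 1 -> Rabs (x k) <= 1.
Proof. intros. pose proof (coord_le x k H); lra. Qed.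

Definition sumabs (us : list (nat -> R)) (x : nat -> R) := fold_right (fun u s => Rabs (dotR d u x) + s) 0 us.

Lemma sumabs_nonneg : forall us x, 0 <= sumabs us x.
Proof. induction us; intros; simpl; [lra|]. pose proof (IHus x); pose proof (Rabs_pos (dotR d a x)); lra. Qed.

Definition clamp (z : R) := Rmax (-1) (Rmin 1 z).

Lemma clamp_lip : forall a b, Rabs (clamp a - clamp b) <= Rabs (a - b).
Proof. intros; unfold clamp, Rmax, Rmin. repeat destruct Rle_dec; unfold Rabs; repeat destruct Rcase_abs; lra. Qed.
Lemma clamp_bnd : forall a, Rabs (clamp a) <= 1.
Proof. intros; unfold clamp, Rmax, Rmin. repeat destruct Rle_dec; unfold Rabs; repeat destruct Rcase_abs; lra. Qed.
Lemma clamp_id : forall a, Rabs a <= 1 -> clamp a = a.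
Proof. intros a H; unfold clamp, Rmax, Rmin. repeat destruct Rle_dec; unfold Rabs in H; destruct Rcase_abs in H; lra. Qed.

Lemma pow_lip : forall N a b, Rabs a <= 1 -> Rabs b <= 1 -> Rabs (a ^ N - b ^ N) <= INR N * Rabs (a - b).
Proof. induction N; intros a b Ha Hb.
  - simpl. replace (1-1) with 0 by ring. rewrite Rabs_R0; lra.
  - replace (a ^ S N - b ^ S N) with (a * (a ^ N - b ^ N) + (a - b) * b ^ N) by (simpl; ring).
    eapply Rle_trans; [apply Rabs_triang|]. rewrite !Rabs_mult, S_INR.
    pose proof (IHN a b Ha Hb). rewrite <- RPow_abs.
    assert (Rabs b ^ N <= 1) by (rewrite <- (pow1 N); apply pow_incr; split; auto; apply Rabs_pos).
    pose proof (Rabs_pos (a - b)). pose proof (Rabs_pos (a ^ N - b ^ N)). pose proof (Rabs_pos a).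
    pose proof (pow_le (Rabs b) N (Rabs_pos b)).
    apply Rle_trans with (1 * (INR N * Rabs (a - b)) + Rabs (a - b) * 1); [|lra].
    apply Rplus_le_compat; [apply Rmult_le_compat; auto|apply Rmult_le_compat_l; auto].
Qed.

Section WithSigma.
Variable sigma : R -> R.
Variable c : R.
Hypothesis Hc : Assumption1 sigma c.
Variable m : nat.
Let N := (2 * m)%nat.
Variable delta : R.
Hypothesis Hdelta : 0 < delta.

Lemma Approx_powlin : forall u, (forall x, normR d x <= 1 -> Rabs (dotR d u x) <= 1) ->
  Approx d sigma (fun x => (dotR d u x) ^ N) (c * 1 * INR N / delta) delta.
Proof. intros u Hu.
  eapply Approx_ext. apply (Approx_base d sigma c Hc (fun z => clamp z ^ N) (INR N) delta u Hdelta).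
  - intros a b. eapply Rle_trans. apply pow_lip; apply clamp_bnd.
    apply Rmult_le_compat_l. apply pos_INR. apply clamp_lip.
  - exists 1. intros z Hz. unfold clamp, Rmax, Rmin. unfold N.
    repeat destruct Rle_dec; try lra; try (rewrite pow_1_even; auto); apply pow1.
  - intros x Hx. simpl. rewrite clamp_id; auto.
Qed.

Lemma Approx_Pol : forall us u0, (forall x, normR d x <= 1 -> Rabs (dotR d u0 x) + sumabs us x <= 1) ->
  Approx d sigma (fun x => Pol (map (fun u => dotR d u x) us) (fun z => z ^ N) (dotR d u0 x))
     (2 ^ length us * (c * 1 * INR N / delta)) (2 ^ length us * delta).
Proof. induction us as [|u us IH]; intros u0 H.
  - simpl. eapply Approx_weaken. apply Approx_powlin. intros x Hx. specialize (H x Hx). simpl in H. lra.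
    lra. lra.
  - eapply Approx_ext. eapply Approx_weaken.
    apply Approx_sub; [apply (IH (fun k => u0 k + u k))|apply (IH (fun k => u0 k - u k))].
    3: simpl; apply Req_le; ring. 3: simpl; apply Req_le; ring.
    + intros x Hx. specialize (H x Hx). simpl in H. rewrite dot_add.
      pose proof (Rabs_triang (dotR d u0 x) (dotR d u x)). lra.
    + intros x Hx. specialize (H x Hx). simpl in H. rewrite dot_sub.
      pose proof (Rabs_triang_inv2 (dotR d u0 x) (dotR d u x)).
      pose proof (Rabs_triang (dotR d u0 x) (- dotR d u x)). rewrite Rabs_Ropp in H1.
      unfold Rminus. lra.
    + intros x Hx. simpl. rewrite dot_add, dot_sub. reflexivity.
Qed.

Lemma Approx_prod : forall ls, length ls = N -> (forall x, normR d x <= 1 -> sumabs ls x <= 1) ->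
  Approx d sigma (fun x => prodR (map (fun u => dotR d u x) ls)) (2 ^ N * (c * 1 * INR N / delta)) delta.
Proof. intros ls Hl H.
  pose proof (Approx_Pol ls (fun _ => 0)) as A. rewrite Hl in A.
  assert (P : 0 < 2 ^ N * INR (Factorial.fact N)) by (apply Rmult_lt_0_compat; [apply pow_lt; lra|apply lt_0_INR; apply Factorial.lt_O_fact]).
  eapply Approx_ext. eapply Approx_weaken. eapply (Approx_scal d sigma _ _ _ (/ (2 ^ N * INR (Factorial.fact N)))).
  apply A. intros x Hx. rewrite dot_zero, Rabs_R0. rewrite Rplus_0_l. auto.
  apply Rle_refl.
  - rewrite Rabs_pos_eq by (left; apply Rinv_0_lt_compat; auto).
    assert (1 <= INR (Factorial.fact N)) by (apply (le_INR 1); apply Factorial.lt_O_fact).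
    apply Rmult_le_reg_l with (2 ^ N * INR (Factorial.fact N)); auto.
    rewrite <- Rmult_assoc, Rinv_r by lra. rewrite Rmult_1_l.
    assert (0 < 2 ^ N) by (apply pow_lt; lra). assert (0 < 2 ^ N * delta) by nra. nra.
  - intros x Hx. simpl. rewrite dot_zero.
    pose proof (Pol_top (map (fun u => dotR d u x) ls) 0) as T. rewrite length_map, Hl in T.
    rewrite T. field; repeat split; try apply INR_fact_neq_0; try (apply pow_nonzero; lra).
Qed.

Variable a : R.

Fixpoint Q (k : nat) (ls : list (nat -> R)) (x : nat -> R) : R :=
  match k with
  | O => prodR (map (fun u => dotR d u x) ls)
  | S k' => sumR d (fun j => Q k' (ev j a :: ev j a :: ls) x)
  end.

Lemma Q_val : forall k ls x, Q k ls x = prodR (map (fun u => dotR d u x) ls) * (a ^ 2 * sumR d (fun j => x j ^ 2)) ^ k.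
Proof. induction k; intros ls x; simpl Q.
  - simpl; ring.
  - rewrite (sumR_ext d _ (fun j => (prodR (map (fun u => dotR d u x) ls) * (a ^ 2 * sumR d (fun j => x j ^ 2)) ^ k * a ^ 2) * x j ^ 2)).
    rewrite sumR_scal. simpl. ring.
    intros j Hj. rewrite IHk. simpl. rewrite dot_ev by auto. ring.
Qed.

Lemma Approx_Q : forall k ls, (length ls + 2 * k = N)%nat -> 0 <= a ->
  (forall x, normR d x <= 1 -> sumabs ls x + 2 * INR k * a <= 1) ->
  Approx d sigma (Q k ls) (INR d ^ k * (2 ^ N * (c * 1 * INR N / delta))) (INR d ^ k * delta).
Proof. induction k; intros ls Hl Ha H.
  - simpl Q. eapply Approx_weaken. apply Approx_prod. lia. intros x Hx; specialize (H x Hx); simpl in H; lra.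
    simpl; lra. simpl; lra.
  - eapply Approx_ext. eapply Approx_weaken. apply (Approx_sumR d sigma d (fun j => Q k (ev j a :: ev j a :: ls))).
    intros j Hj. apply IHk. simpl; lia. auto.
    intros x Hx. specialize (H x Hx). simpl. rewrite dot_ev by auto. rewrite S_INR in H.
    rewrite Rabs_mult, (Rabs_pos_eq a) by auto. pose proof (coord_ball x j Hj Hx).
    assert (a * Rabs (x j) <= a) by (rewrite <- (Rmult_1_r a) at 2; apply Rmult_le_compat_l; auto). lra.
    simpl; apply Req_le; ring. simpl; apply Req_le; ring.
    intros; simpl; reflexivity.
Qed.

End WithSigma.

Lemma Approx_normpow : forall sigma c (Hc : Assumption1 sigma c) m delta, 0 < delta ->
  Approx d sigma (fun x => (sumR d (fun j => x j ^ 2)) ^ m)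
    (INR d ^ m * (2 ^ (2 * m) * (c * 1 * INR (2 * m) / delta))) (INR (S (2 * m)) ^ (2 * m) * (INR d ^ m * delta)).
Proof. intros sigma c Hc m delta Hd.
  set (a := / INR (S (2 * m))).
  assert (Pa : 0 < INR (S (2 * m))) by (apply lt_0_INR; lia).
  pose proof (Approx_Q sigma c Hc m delta Hd a m nil eq_refl) as A.
  eapply Approx_ext. rewrite <- (Rabs_pos_eq (INR (S (2 * m)) ^ (2 * m))) by (apply pow_le; lra).
  apply Approx_scal. apply A. left; apply Rinv_0_lt_compat; auto.
  intros x _. simpl sumabs. unfold a. replace (S (2 * m)) with (2 * m + 1)%nat by lia.
  rewrite plus_INR, mult_INR. simpl INR. pose proof (pos_INR m). rewrite Rplus_0_l.
  apply Rmult_le_reg_r with (2 * INR m + 1); [lra|]. rewrite Rmult_assoc, Rinv_l by lra. lra.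
  intros x _. cbv beta. rewrite Q_val. simpl map. simpl prodR. rewrite Rpow_mult_distr, <- pow_mult.
  replace (INR (S (2 * m)) ^ (2 * m) * (1 * (a ^ (2 * m) * sumR d (fun j => x j ^ 2) ^ m)))
    with ((INR (S (2 * m)) * a) ^ (2 * m) * sumR d (fun j => x j ^ 2) ^ m) by (rewrite Rpow_mult_distr; ring).
  unfold a; rewrite Rinv_r by lra; rewrite pow1; ring.
Qed.

End Vec.

Definition bern (n k : nat) (t : R) := C n k * t ^ k * (1 - t) ^ (n - k).

Lemma bern_sum : forall n t, sumR (S n) (fun k => bern n k t) = 1.
Proof. intros n t. unfold bern. rewrite <- sum_f_R0_sumR. rewrite <- binomial.
  replace (t + (1 - t)) with 1 by ring. apply pow1. Qed.

Lemma C_nonneg : forall n k, 0 <= C n k.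
Proof. intros; unfold C, Rdiv. apply Rmult_le_pos. apply pos_INR.
  left; apply Rinv_0_lt_compat. apply Rmult_lt_0_compat; apply lt_0_INR; apply Factorial.lt_O_fact. Qed.

Lemma bern_nonneg : forall n k t, 0 <= t <= 1 -> 0 <= bern n k t.
Proof. intros; unfold bern. apply Rmult_le_pos. apply Rmult_le_pos. apply C_nonneg.
  apply pow_le; lra. apply pow_le; lra. Qed.

Lemma C_shift : forall m j, INR (S j) * C (S m) (S j) = INR (S m) * C m j.
Proof. intros; unfold C. simpl (S m - S j)%nat. rewrite !fact_simpl, !mult_INR.
  field. repeat split; try apply INR_fact_neq_0; apply not_0_INR; lia. Qed.

Lemma bern_shift : forall m g t, sumR (S (S m)) (fun k => g k * INR k * bern (S m) k t)
   = INR (S m) * t * sumR (S m) (fun j => g (S j) * bern m j t).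
Proof. intros. rewrite sumR_shift. simpl INR at 1. rewrite Rmult_0_r, Rmult_0_l, Rplus_0_l.
  rewrite <- sumR_scal. apply sumR_ext. intros j _.
  unfold bern. simpl (S m - S j)%nat.
  replace (g (S j) * INR (S j) * (C (S m) (S j) * t ^ S j * (1 - t) ^ (m - j)))
    with (g (S j) * (INR (S j) * C (S m) (S j)) * t ^ S j * (1 - t) ^ (m - j)) by ring.
  rewrite C_shift. simpl; ring. Qed.

Lemma bern_M1 : forall n t, sumR (S n) (fun k => INR k * bern n k t) = INR n * t.
Proof. intros [|m] t.
  - simpl. ring.
  - rewrite (sumR_ext (S (S m)) (fun k => INR k * bern (S m) k t) (fun k => (fun _ => 1) k * INR k * bern (S m) k t)) by (intros; ring).
    rewrite bern_shift. rewrite (sumR_ext (S m) (fun j => (fun _ => 1) (S j) * bern m j t) (fun j => bern m j t)) by (intros; ring).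
    rewrite bern_sum; ring. Qed.

Lemma bern_M2 : forall m t, sumR (S (S m)) (fun k => INR k * INR k * bern (S m) k t) = INR (S m) * t * (INR m * t + 1).
Proof. intros m t.
  pose proof (bern_shift m (fun k => INR k) t) as E. cbv beta in E. rewrite E. f_equal.
  rewrite (sumR_ext (S m) (fun j => (fun k => INR k) (S j) * bern m j t) (fun j => INR j * bern m j t + bern m j t)) by (intros; rewrite S_INR; ring).
  rewrite sumR_add, bern_M1, bern_sum. ring. Qed.

Lemma bern_var : forall m t, sumR (S (S m)) (fun k => bern (S m) k t * (INR k / INR (S m) - t) ^ 2)
   = t * (1 - t) / INR (S m).
Proof. intros m t. set (n := INR (S m)). assert (Hn : 0 < n) by (apply lt_0_INR; lia).
  rewrite (sumR_ext (S (S m)) (fun k => bern (S m) k t * (INR k / n - t) ^ 2) (fun k => (/ n ^ 2 * (INR k * INR k * bern (S m) k t) + (- 2 * t / n) * (INR k * bern (S m) k t)) + t ^ 2 * bern (S m) k t)).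
  2: intros; field; lra.
  rewrite !sumR_add, !sumR_scal, bern_M2, bern_M1, bern_sum.
  fold n. replace (INR m) with (n - 1) by (unfold n; rewrite S_INR; ring). field. lra. Qed.

Lemma sqrt_trick : forall u eta, 0 <= u -> 0 < eta -> sqrt u <= eta + u ^ 2 / eta ^ 3.
Proof. intros u eta Hu He.
  assert (0 <= u ^ 2 / eta ^ 3) by (apply Rmult_le_pos; [apply pow_le; auto|left; apply Rinv_0_lt_compat; apply pow_lt; auto]).
  destruct (Rle_lt_dec (sqrt u) eta). lra.
  set (s := sqrt u) in *. assert (Hs : s * s = u) by (apply sqrt_sqrt; auto).
  assert (u ^ 2 / eta ^ 3 >= s); [|lra].
  apply Rle_ge. apply Rmult_le_reg_r with (eta ^ 3). apply pow_lt; auto.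
  unfold Rdiv. rewrite Rmult_assoc, Rinv_l by (apply pow_nonzero; lra). rewrite Rmult_1_r.
  rewrite <- Hs. simpl.
  assert (eta * eta * eta <= s * s * s) by (apply Rmult_le_compat; try nra; apply Rmult_le_compat; lra).
  nra. Qed.

Lemma bern_err : forall (psi : R -> R) m t eta, 0 <= t <= 1 -> 0 < eta ->
  (forall a b, 0 <= a <= 1 -> 0 <= b <= 1 -> Rabs (psi a - psi b) <= sqrt (Rabs (a - b))) ->
  Rabs (sumR (S (S m)) (fun k => psi (INR k / INR (S m)) * bern (S m) k t) - psi t) <= eta + 1 / (INR (S m) * eta ^ 3).
Proof. intros psi m t eta Ht He Hpsi. set (n := S m).
  assert (Hn : 0 < INR n) by (apply lt_0_INR; unfold n; lia).
  replace (psi t) with (sumR (S n) (fun k => psi t * bern n k t)) by (rewrite sumR_scal, bern_sum; ring).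
  replace (sumR (S n) (fun k => psi (INR k / INR n) * bern n k t) - sumR (S n) (fun k => psi t * bern n k t))
    with (sumR (S n) (fun k => bern n k t * (psi (INR k / INR n) - psi t))).
  2: { replace (sumR (S n) (fun k => psi (INR k / INR n) * bern n k t) - sumR (S n) (fun k => psi t * bern n k t))
      with (sumR (S n) (fun k => psi (INR k / INR n) * bern n k t) + (-1) * sumR (S n) (fun k => psi t * bern n k t)) by ring.
      rewrite <- sumR_scal, <- sumR_add. apply sumR_ext; intros; ring. }
  eapply Rle_trans. apply sumR_abs.
  eapply Rle_trans. apply (sumR_le _ _ (fun k => eta * bern n k t + / eta ^ 3 * (bern n k t * (INR k / INR n - t) ^ 2))).
  - intros k Hk. rewrite Rabs_mult, (Rabs_pos_eq (bern n k t)) by (apply bern_nonneg; auto).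
    assert (Hk' : 0 <= INR k / INR n <= 1).
    { split. apply Rmult_le_pos; [apply pos_INR|left; apply Rinv_0_lt_compat; auto].
      apply Rmult_le_reg_r with (INR n); auto. unfold Rdiv; rewrite Rmult_assoc, Rinv_l by lra.
      rewrite Rmult_1_l, Rmult_1_r. apply le_INR; lia. }
    pose proof (Hpsi _ _ Hk' Ht). pose proof (sqrt_trick (Rabs (INR k / INR n - t)) eta (Rabs_pos _) He).
    rewrite <- pow2_abs. pose proof (bern_nonneg n k t Ht).
    apply Rle_trans with (bern n k t * (eta + Rabs (INR k / INR n - t) ^ 2 / eta ^ 3)).
    apply Rmult_le_compat_l; auto; lra. right; unfold Rdiv; ring.
  - rewrite sumR_add, !sumR_scal, bern_sum. unfold n; rewrite bern_var. fold n.
    assert (t * (1 - t) / INR n <= 1 / INR n).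
    { unfold Rdiv. apply Rmult_le_compat_r. left; apply Rinv_0_lt_compat; auto. nra. }
    assert (0 < eta ^ 3) by (apply pow_lt; auto).
    replace (1 / (INR n * eta ^ 3)) with (/ eta ^ 3 * (1 / INR n)) by (field; lra).
    apply Rplus_le_compat. lra. apply Rmult_le_compat_l; auto. left; apply Rinv_0_lt_compat; auto.
Qed.

Lemma mono3 : forall a a' b b' e e', 0 <= a <= a' -> 0 <= b <= b' -> 0 <= e <= e' -> a * (b * e) <= a' * (b' * e').
Proof. intros. apply Rmult_le_compat; try lra. apply Rmult_le_pos; lra. apply Rmult_le_compat; lra. Qed.

Lemma C_le : forall n k, (k <= n)%nat -> C n k <= 2 ^ n.
Proof. intros n k Hk. replace 2 with (1 + 1) by ring. rewrite binomial, sum_f_R0_sumR.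
  replace (C n k) with (sumR (S n) (fun j => if Nat.eqb j k then C n j else 0)) by (apply sumR_single; lia).
  apply sumR_le. intros i _. rewrite !pow1. destruct (Nat.eqb i k). lra. rewrite !Rmult_1_r. apply C_nonneg. Qed.

Lemma bern_expand : forall n k t, (k <= n)%nat ->
  bern n k t = sumR (S (n - k)) (fun i => (C n k * C (n - k) i * (-1) ^ i) * t ^ (k + i)).
Proof. intros n k t Hk. unfold bern. replace (1 - t) with (-t + 1) by ring.
  rewrite binomial, sum_f_R0_sumR. rewrite Rmult_assoc, <- !sumR_scal. apply sumR_ext. intros i _.
  rewrite pow1, pow_add. replace (-t) with (-1 * t) by ring. rewrite Rpow_mult_distr. ring. Qed.

Section Final.
Variable d : nat.
Hypothesis Hd : (1 <= d)%nat.
Variable sigma : R -> R.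
Variable c : R.
Hypothesis Hc : Assumption1 sigma c.

Definition Sq (x : nat -> R) := sumR d (fun j => x j ^ 2).
Definition Wu (n : nat) (de : R) := INR d ^ n * (2 ^ (2 * n) * (c * 1 * INR (2 * n) / de)).
Definition Eu (n : nat) (de : R) := 4 ^ n * (INR (S (2 * n)) ^ (2 * n) * (INR d ^ n * de)).

Lemma c_ge1 : 1 <= c. Proof. destruct Hc; auto. Qed.
Lemma d_ge1 : 1 <= INR d. Proof. apply (le_INR 1); auto. Qed.

Lemma term_approx : forall n j de coef, 0 < de -> (j <= n)%nat -> Rabs coef <= 4 ^ n ->
  Approx d sigma (fun x => coef * Sq x ^ j) (Wu n de) (Eu n de).
Proof. intros n j de coef Hde Hj Hcoef. pose proof c_ge1. pose proof d_ge1.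
  eapply Approx_weaken. apply Approx_scal. apply (Approx_normpow d sigma c Hc j de Hde).
  - unfold Wu. apply mono3.
    + split. apply pow_le; lra. apply Rle_pow; auto.
    + split. apply pow_le; lra. apply Rle_pow; lra || lia.
    + assert (INR (2 * j) <= INR (2 * n)) by (apply le_INR; lia). pose proof (pos_INR (2 * j)).
      split; unfold Rdiv; apply Rmult_le_pos || apply Rmult_le_compat_r; try (left; apply Rinv_0_lt_compat; auto);
      try (apply Rmult_le_pos; lra); try (apply Rmult_le_compat_l; lra).
  - unfold Eu. apply Rmult_le_compat. apply Rabs_pos.
    apply Rmult_le_pos. apply pow_le; apply pos_INR. apply Rmult_le_pos. apply pow_le; lra. lra. auto.
    apply mono3.
    + split. apply pow_le; apply pos_INR. apply Rle_trans with (INR (S (2 * n)) ^ (2 * j)).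
      apply pow_incr; split; [apply pos_INR|apply le_INR; lia]. apply Rle_pow. apply (le_INR 1); lia. lia.
    + split. apply pow_le; lra. apply Rle_pow; auto.
    + lra.
Qed.

Lemma Wu_nonneg : forall n de, 0 < de -> 0 <= Wu n de.
Proof. intros. pose proof c_ge1. unfold Wu. apply Rmult_le_pos. apply pow_le; apply pos_INR.
  apply Rmult_le_pos. apply pow_le; lra. unfold Rdiv. apply Rmult_le_pos. apply Rmult_le_pos. lra. apply pos_INR.
  left; apply Rinv_0_lt_compat; auto. Qed.
Lemma Eu_nonneg : forall n de, 0 < de -> 0 <= Eu n de.
Proof. intros. unfold Eu. apply Rmult_le_pos. apply pow_le; lra.
  apply Rmult_le_pos. apply pow_le; apply pos_INR. apply Rmult_le_pos. apply pow_le; apply pos_INR. lra. Qed.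

Lemma poly_approx : forall n (psi : R -> R) de, 0 < de ->
  (forall k, (k <= n)%nat -> Rabs (psi (INR k / INR n)) <= 1) ->
  Approx d sigma (fun x => sumR (S n) (fun k => psi (INR k / INR n) * bern n k (Sq x)))
    (INR (S n) * (INR (S n) * Wu n de)) (INR (S n) * (INR (S n) * Eu n de)).
Proof. intros n psi de Hde Hpsi.
  eapply Approx_ext. apply (Approx_sumR d sigma (S n) (fun k x => sumR (S (n - k)) (fun i => (psi (INR k / INR n) * (C n k * C (n - k) i * (-1) ^ i)) * Sq x ^ (k + i)))).
  - intros k Hk. eapply Approx_weaken. apply Approx_sumR. intros i Hi. apply (term_approx n (k + i) de); auto. lia.
    + rewrite !Rabs_mult, pow_1_abs, Rmult_1_r. rewrite (Rabs_pos_eq (C n k)) by apply C_nonneg.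
      rewrite (Rabs_pos_eq (C (n - k) i)) by apply C_nonneg.
      replace (4 ^ n) with (1 * (2 ^ n * 2 ^ n)) by (replace 4 with (2 * 2) by ring; rewrite Rpow_mult_distr; ring).
      apply Rmult_le_compat; try apply Rabs_pos. apply Rmult_le_pos; apply C_nonneg.
      apply Hpsi; lia. apply Rmult_le_compat; try apply C_nonneg. apply C_le; lia.
      apply Rle_trans with (2 ^ (n - k)). apply C_le; lia. apply Rle_pow; lra || lia.
    + apply Rmult_le_compat_r. apply Wu_nonneg; auto. apply le_INR; lia.
    + apply Rmult_le_compat_r. apply Eu_nonneg; auto. apply le_INR; lia.
  - intros x _. apply sumR_ext. intros k Hk. rewrite bern_expand by lia. rewrite <- sumR_scal.
    apply sumR_ext; intros; ring.
Qed.

Lemma sqrt_diff : forall a b, 0 <= a -> 0 <= b -> Rabs (sqrt a - sqrt b) <= sqrt (Rabs (a - b)).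
Proof. intros a b Ha Hb. rewrite <- (sqrt_pow2 (Rabs (sqrt a - sqrt b))) by apply Rabs_pos.
  apply sqrt_le_1_alt.
  pose proof (sqrt_sqrt a Ha). pose proof (sqrt_sqrt b Hb). pose proof (sqrt_pos a). pose proof (sqrt_pos b).
  set (p := sqrt a) in *. set (q := sqrt b) in *. rewrite <- H, <- H0.
  rewrite pow2_abs. destruct (Rle_dec q p); [rewrite Rabs_pos_eq by nra | rewrite Rabs_left1 by nra]; nra. Qed.

Lemma normR_ev0 : forall r, normR d (ev 0 r) = Rabs r.
Proof. intros r. unfold normR. rewrite (sumR_ext d _ (fun k => if Nat.eqb k 0 then r ^ 2 else 0)).
  rewrite sumR_single by lia. rewrite <- pow2_abs. apply sqrt_pow2. apply Rabs_pos.
  intros i _. unfold ev. destruct (Nat.eqb i 0); ring. Qed.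

Variable phi : R -> R.
Hypothesis Hphi : forall x y : nat -> R,
  Rabs (phi (normR d x) - phi (normR d y)) <= normR d (fun k => x k - y k).

Definition psi (t : R) := phi (sqrt t) - phi 0.

Lemma psi_holder : forall a b, 0 <= a <= 1 -> 0 <= b <= 1 -> Rabs (psi a - psi b) <= sqrt (Rabs (a - b)).
Proof. intros a b Ha Hb. unfold psi. replace (phi (sqrt a) - phi 0 - (phi (sqrt b) - phi 0)) with (phi (sqrt a) - phi (sqrt b)) by ring.
  pose proof (Hphi (ev 0 (sqrt a)) (ev 0 (sqrt b))) as H.
  rewrite !normR_ev0 in H. rewrite (Rabs_pos_eq (sqrt a)), (Rabs_pos_eq (sqrt b)) in H by apply sqrt_pos.
  eapply Rle_trans. apply H.
  replace (normR d (fun k => ev 0 (sqrt a) k - ev 0 (sqrt b) k)) with (normR d (ev 0 (sqrt a - sqrt b))).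
  rewrite normR_ev0. apply sqrt_diff; lra.
  unfold normR. f_equal. apply sumR_ext. intros i _. unfold ev. destruct (Nat.eqb i 0); ring.
Qed.

Lemma psi_bnd : forall t, 0 <= t <= 1 -> Rabs (psi t) <= 1.
Proof. intros t Ht. replace (psi t) with (psi t - psi 0) by (unfold psi; rewrite sqrt_0; ring).
  eapply Rle_trans. apply psi_holder; lra. rewrite <- sqrt_1. apply sqrt_le_1_alt.
  rewrite Rminus_0_r, Rabs_pos_eq; lra. Qed.

Definition de (n : nat) (eps : R) := eps / (2 * (INR (S n) * (INR (S n) * (4 ^ n * (INR (S (2 * n)) ^ (2 * n) * INR d ^ n))))).
Definition Wtot (n : nat) (eps : R) := INR (S n) * (INR (S n) * Wu n (de n eps)).

Lemma main_fixed : forall eps n, 0 < eps < 1 -> (1 <= n)%nat -> 256 / eps ^ 4 <= INR n ->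
  exists w v b W b0, INR w <= Wtot n eps /\ forall x, normR d x <= 1 ->
    Rabs (sumR w (fun i => v i * sigma (dotR d (W i) x + b i)) + b0 - phi (normR d x)) <= eps.
Proof. intros eps n He Hn Hn2.
  assert (Pden : 0 < INR (S n) * (INR (S n) * (4 ^ n * (INR (S (2 * n)) ^ (2 * n) * INR d ^ n)))).
  { pose proof d_ge1. assert (0 < INR (S n)) by (apply lt_0_INR; lia).
    assert (0 < INR (S (2 * n))) by (apply lt_0_INR; lia).
    repeat apply Rmult_lt_0_compat; auto; apply pow_lt; lra. }
  assert (Hde : 0 < de n eps) by (unfold de; apply Rdiv_lt_0_compat; lra).
  assert (Hk01 : forall k, (k <= n)%nat -> Rabs (psi (INR k / INR n)) <= 1).
  { intros k Hk. apply psi_bnd. assert (0 < INR n) by (apply lt_0_INR; lia). split.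
    apply Rmult_le_pos; [apply pos_INR|left; apply Rinv_0_lt_compat; auto].
    apply Rmult_le_reg_r with (INR n); auto. unfold Rdiv; rewrite Rmult_assoc, Rinv_l by lra.
    rewrite Rmult_1_l, Rmult_1_r; apply le_INR; lia. }
  assert (A := Approx_add d sigma _ _ _ _ _ _ (poly_approx n psi (de n eps) Hde Hk01) (Approx_const d sigma (phi 0))).
  destruct A as (w & v & b & W & b0 & Hw & H). exists w, v, b, W, b0. split. unfold Wtot; lra.
  intros x Hx. specialize (H x Hx). unfold Net in H.
  assert (HS : 0 <= Sq x <= 1).
  { split. apply sq_nonneg_sum. unfold normR in Hx. fold (Sq x) in Hx.
    pose proof (sqrt_sqrt (Sq x) (sq_nonneg_sum d x)). pose proof (sqrt_pos (Sq x)). nra. }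
  destruct n as [|m]; [lia|].
  pose proof (bern_err psi m (Sq x) (eps / 4) HS ltac:(lra) psi_holder) as B.
  assert (E1 : INR (S (S m)) * (INR (S (S m)) * Eu (S m) (de (S m) eps)) + 0 = eps / 2).
  { unfold Eu, de. pose proof d_ge1. field. repeat split; try lra; try (apply pow_nonzero); try (apply not_0_INR; lia); lra. }
  assert (E2 : 1 / (INR (S m) * (eps / 4) ^ 3) <= eps / 4).
  { assert (0 < INR (S m)) by (apply lt_0_INR; lia). assert (0 < eps ^ 3) by (apply pow_lt; lra).
    assert (256 <= INR (S m) * eps ^ 4).
    { apply Rmult_le_reg_r with (/ eps ^ 4). apply Rinv_0_lt_compat; apply pow_lt; lra.
      rewrite Rmult_assoc, Rinv_r by (apply pow_nonzero; lra). lra. }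
    replace (1 / (INR (S m) * (eps / 4) ^ 3)) with (64 / (INR (S m) * eps ^ 3)) by (field; lra).
    apply Rmult_le_reg_r with (INR (S m) * eps ^ 3). nra. unfold Rdiv. rewrite Rmult_assoc, Rinv_l by nra.
    replace (eps * / 4 * (INR (S m) * eps ^ 3)) with (INR (S m) * eps ^ 4 / 4) by (simpl; field). lra. }
  rewrite E1 in H.
  replace (phi (normR d x)) with (psi (Sq x) + phi 0) by (unfold psi, Sq, normR; ring).
  set (P := sumR (S (S m)) (fun k => psi (INR k / INR (S m)) * bern (S m) k (Sq x))) in *.
  replace (sumR w (fun i => v i * sigma (dotR d (W i) x + b i)) + b0 - (psi (Sq x) + phi 0))
    with ((sumR w (fun i => v i * sigma (dotR d (W i) x + b i)) + b0 - (P + phi 0)) + (P - psi (Sq x))) by ring.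
  eapply Rle_trans. apply Rabs_triang. lra.
Qed.

End Final.

Lemma exp_le_mono : forall a b, a <= b -> exp a <= exp b.
Proof. intros a b [H|H]. left; apply exp_increasing; auto. subst; lra. Qed.

Lemma ln_le_mono : forall a b, 0 < a -> a <= b -> ln a <= ln b.
Proof. intros a b Ha [H|H]. left; apply ln_increasing; auto. subst; lra. Qed.

Definition Cst (c : R) := ln (2 * c) / ln 2 + 43176.

Lemma Wtot_bound : forall d c eps n, (2 <= d)%nat -> 1 <= c -> 0 < eps < 1 -> (1 <= n)%nat ->
  INR n <= 257 * (/ eps) ^ 4 ->
  Wtot d c n eps <= exp (Cst c * / eps ^ 9 * ln (INR d / eps)).
Proof. intros d c eps n Hd Hc He Hn Hn2.
  set (u := / eps). assert (Hn2u : INR n <= 257 * u ^ 4) by exact Hn2. clear Hn2. assert (Hu : 1 < u) by (unfold u; rewrite <- Rinv_1; apply Rinv_lt_contravar; lra).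
  assert (Hdd : 2 <= INR d) by (apply (le_INR 2); auto).
  set (X := INR d / eps). assert (HX : X = INR d * u) by reflexivity.
  assert (HX2 : 2 < X) by (rewrite HX; nra).
  assert (Hu4 : 1 <= u ^ 4) by (rewrite <- (pow1 4); apply pow_incr; lra).
  assert (HuX : u ^ 4 <= X ^ 4) by (apply pow_incr; rewrite HX; nra).
  set (Y := 1000 * X ^ 4).
  assert (HXY : X <= Y).
  { assert (X ^ 1 <= X ^ 4) by (apply Rle_pow; lra || lia). simpl in H. unfold Y; nra. }
  assert (HY1 : 1000 <= Y) by (unfold Y; lra).
  assert (HnY : INR (2 * n) <= Y) by (rewrite mult_INR; simpl INR; unfold Y; lra).
  assert (HSnY : INR (S n) <= Y) by (rewrite S_INR; unfold Y; lra).
  assert (HS2Y : INR (S (2 * n)) <= Y) by (rewrite S_INR, mult_INR; simpl INR; unfold Y; nra).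
  assert (HdY : INR d <= Y) by (assert (INR d <= X) by (rewrite HX; nra); lra).
  assert (HuY : u <= Y) by (assert (u <= u ^ 4) by (replace u with (u ^ 1) at 1 by ring; apply Rle_pow; lra || lia); unfold Y; nra).
  set (Z := Y ^ n).
  assert (HYZ : Y <= Z) by (unfold Z; replace Y with (Y ^ 1) at 1 by ring; apply Rle_pow; lra || lia).
  assert (HZ : 0 < Z) by (unfold Z; apply pow_lt; lra).
  assert (P0 : forall k, 0 <= INR k) by apply pos_INR.
  assert (Hpn : forall k, 0 < INR (S k)) by (intros; apply lt_0_INR; lia).
  assert (EW : Wtot d c n eps = 2 * c * (INR (2 * n) * (INR (S n) ^ 4 * (2 ^ (2 * n) * (4 ^ n * (INR (S (2 * n)) ^ (2 * n) * (INR d ^ n * (INR d ^ n * u)))))))).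
  { unfold Wtot, Wu, de, u. field. repeat split; try lra; try (apply pow_nonzero); try (apply not_0_INR; lia); try lra. }
  rewrite EW.
  assert (B : 2 * c * (INR (2 * n) * (INR (S n) ^ 4 * (2 ^ (2 * n) * (4 ^ n * (INR (S (2 * n)) ^ (2 * n) * (INR d ^ n * (INR d ^ n * u)))))))
     <= 2 * c * (Z * (Z ^ 4 * (Z * (Z * (Z ^ 2 * (Z * (Z * Z)))))))).
  { apply Rmult_le_compat_l; [lra|].
    assert (H4 : INR (S n) ^ 4 <= Z ^ 4) by (apply pow_incr; split; [apply P0|lra]).
    assert (H2 : 2 ^ (2 * n) <= Z) by (rewrite pow_sqr; apply pow_incr; lra).
    assert (H44 : 4 ^ n <= Z) by (apply pow_incr; lra).
    assert (H22 : INR (S (2 * n)) ^ (2 * n) <= Z ^ 2).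
    { unfold Z. rewrite <- pow_mult. replace (n * 2)%nat with (2 * n)%nat by lia. apply pow_incr; split; [apply P0|lra]. }
    assert (Hdn : INR d ^ n <= Z) by (apply pow_incr; lra).
    repeat (apply Rmult_le_compat; [repeat (apply Rmult_le_pos || apply pow_le || apply P0); lra
                                   |repeat (apply Rmult_le_pos || apply pow_le || apply P0); lra | |]);
    try lra. }
  eapply Rle_trans. apply B.
  replace (2 * c * (Z * (Z ^ 4 * (Z * (Z * (Z ^ 2 * (Z * (Z * Z)))))))) with (2 * c * Z ^ 12) by ring.
  rewrite <- (exp_ln (2 * c * Z ^ 12)) by (apply Rmult_lt_0_compat; [lra|apply pow_lt; auto]).
  apply exp_le_mono.
  rewrite ln_mult, ln_pow by (try apply pow_lt; lra). unfold Z. rewrite ln_pow by lra.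
  unfold Y. rewrite (ln_mult 1000 (X ^ 4)), (ln_pow X) by (try apply pow_lt; lra).
  assert (L2 : 0 < ln 2) by (rewrite <- ln_1; apply ln_increasing; lra).
  assert (L2X : ln 2 <= ln X) by (apply ln_le_mono; lra).
  assert (L1000 : ln 1000 <= 10 * ln 2).
  { replace 10 with (INR 10) by (simpl; ring). rewrite <- ln_pow by lra. apply ln_le_mono; [lra|simpl; lra]. }
  assert (Lc : 0 <= ln (2 * c)) by (rewrite <- ln_1; apply ln_le_mono; lra).
  assert (U9 : u ^ 4 <= u ^ 9) by (apply Rle_pow; lra || lia).
  replace (/ eps ^ 9) with (u ^ 9) by (unfold u; rewrite pow_inv; auto).
  assert (Hn3 : INR n <= 257 * u ^ 9) by lra.
  assert (LX : 0 < ln X) by lra.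
  unfold Cst.
  assert (A1 : ln (2 * c) <= ln (2 * c) / ln 2 * u ^ 9 * ln X).
  { apply Rle_trans with (ln (2 * c) / ln 2 * ln X).
    - apply Rmult_le_reg_r with (ln 2); auto. unfold Rdiv.
      replace (ln (2 * c) * / ln 2 * ln X * ln 2) with (ln (2 * c) * ln X) by (field; lra). nra.
    - assert (0 <= ln (2 * c) / ln 2) by (apply Rmult_le_pos; [lra|left; apply Rinv_0_lt_compat; lra]).
      assert (1 <= u ^ 9) by lra. assert (0 <= ln (2 * c) / ln 2 * ln X) by (apply Rmult_le_pos; lra).
      replace (ln (2 * c) / ln 2 * u ^ 9 * ln X) with ((ln (2 * c) / ln 2 * ln X) * u ^ 9) by ring.
      rewrite <- (Rmult_1_r (ln (2 * c) / ln 2 * ln X)) at 1. apply Rmult_le_compat_l; lra. }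
  assert (A2 : INR 12 * (INR n * (ln 1000 + INR 4 * ln X)) <= 43176 * u ^ 9 * ln X).
  { replace (INR 12) with 12 by (simpl; ring). replace (INR 4) with 4 by (simpl; ring).
    assert (ln 1000 + 4 * ln X <= 14 * ln X) by lra.
    assert (0 <= INR n) by apply pos_INR.
    apply Rle_trans with (12 * (INR n * (14 * ln X))). apply Rmult_le_compat_l; [lra|]. apply Rmult_le_compat_l; lra.
    nra. }
  lra.
Qed.

Theorem theorem1 :
  forall sigma : R -> R,
  (exists c, Assumption1 sigma c) ->
  exists C : R, 0 < C /\
  forall (d : nat) (eps : R) (phi : R -> R),
    (2 <= d)%nat -> 0 < eps < 1 ->
    (forall x y : nat -> R,
        Rabs (phi (normR d x) - phi (normR d y)) <= normR d (fun k => x k - y k)) ->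
    exists (w : nat) (v b : nat -> R) (W : nat -> nat -> R) (b0 : R),
      INR w <= exp (C * / eps ^ 9 * ln (INR d / eps)) /\
      forall x : nat -> R, normR d x <= 1 ->
        Rabs (sumR w (fun i => v i * sigma (dotR d (W i) x + b i)) + b0
              - phi (normR d x)) <= eps.
Proof.
  intros sigma [c Hc]. assert (Hc1 : 1 <= c) by (destruct Hc; auto).
  exists (Cst c). split.
  { unfold Cst. assert (0 < ln 2) by (rewrite <- ln_1; apply ln_increasing; lra).
    assert (0 <= ln (2 * c)) by (rewrite <- ln_1; apply ln_le_mono; lra).
    assert (0 <= ln (2 * c) / ln 2) by (apply Rmult_le_pos; [lra|left; apply Rinv_0_lt_compat; lra]). lra. }
  intros d eps phi Hd He Hphi.
  set (r := 256 / eps ^ 4).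
  assert (Hv : 1 <= / eps ^ 4).
  { rewrite <- Rinv_1. apply Rinv_le_contravar. apply pow_lt; lra. rewrite <- (pow1 4). apply pow_incr; lra. }
  assert (Hr : 0 < r) by (unfold r, Rdiv; lra).
  destruct (archimed r) as [A1 A2].
  set (z := up r) in *.
  assert (Hz : (0 <= z)%Z) by (apply le_IZR; lra).
  set (n := Z.to_nat z).
  assert (Hn : INR n = IZR z) by (unfold n; rewrite INR_IZR_INZ, Z2Nat.id; auto).
  assert (Hn1 : (1 <= n)%nat) by (apply INR_lt with (n := 0%nat); simpl; lra).
  destruct (main_fixed d ltac:(lia) sigma c Hc phi Hphi eps n He Hn1 ltac:(unfold r in *; lra))
    as (w & v & b & W & b0 & Hw & H).
  exists w, v, b, W, b0. split; auto.
  eapply Rle_trans. apply Hw. apply Wtot_bound; auto.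
  rewrite pow_inv. unfold r in *. unfold Rdiv in *. lra.
Qed.
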